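(* Let $\mathbb{F}\in\{\mathbb{R},\mathbb{C}\}$ and let $A$ be an $\ell\times\ell$ matrix over $\mathbb{F}$ whose minimal polynomial equals its characteristic polynomial. Then there is an $\ell\times\ell\times2$ tensor $T$ over $\mathbb{F}$ of rank at most $1$ such that $(E_\ell;A)-T$ is diagonalizable over $\mathbb{F}$. In particular $\mathrm{rank}_{\mathbb{F}}(E_\ell;A)\le \ell+1$.
   Context: For matrices $A,B$ of the same size $m\times n$, $(A;B)$ denotes the $m\times n\times 2$ tensor with slices $A,B$; tensors are added slicewise. A rank-one tensor over $\mathbb{F}$ has the form $(\alpha\,\mathbf{a}\mathbf{b}^T;\beta\,\mathbf{a}\mathbf{b}^T)$ with nonzero $\mathbf{a},\mathbf{b}$ and $(\alpha,\beta)\neq0$; $\mathrm{rank}_{\mathbb{F}}(T)$ is the minimal number of rank-one tensors summing to $T$. $E_\ell$ is the $\ell\times\ell$ identity. An $m\times n\times 2$ tensor $(A;B)$ is diagonalizable over $\mathbb{F}$ if there are nonsingular $P,Q$ over $\mathbb{F}$ and diagonal $D_A,D_B$ with $PAQ=(D_A,O)$, $PBQ=(D_B,O)$ if $m\le n$, and $PAQ=(D_A,O)^T$, $PBQ=(D_B,O)^T$ if $m>n$. *)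

(* Defs.v *)
From HB Require Import structures.
From mathcomp Require Import all_boot all_order all_algebra.
Set Implicit Arguments. Unset Strict Implicit. Unset Printing Implicit Defensive.
Import Order.TTheory GRing.Theory Num.Theory.
Local Open Scope ring_scope.

(* An m x n x 2 tensor (A;B) is represented by the pair of its two slices. *)
Definition tensor2 (F : fieldType) (m n : nat) := ('M[F]_(m, n) * 'M[F]_(m, n))%type.

Definition tadd (F : fieldType) (m n : nat) (S T : tensor2 F m n) : tensor2 F m n :=
  (S.1 + T.1, S.2 + T.2).
Definition tsub (F : fieldType) (m n : nat) (S T : tensor2 F m n) : tensor2 F m n :=
  (S.1 - T.1, S.2 - T.2).
Definition tzero (F : fieldType) (m n : nat) : tensor2 F m n := (0, 0).

Definition rank_one_tensor (F : fieldType) (m n : nat) (T : tensor2 F m n) : Prop :=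
  exists (a : 'cV[F]_m) (b : 'cV[F]_n) (alpha beta : F),
    [/\ a != 0, b != 0, (alpha, beta) != (0, 0) &
        T = (alpha *: (a *m b^T), beta *: (a *m b^T))].

Definition tensor_rank_le (F : fieldType) (m n : nat) (T : tensor2 F m n) (r : nat)
  : Prop :=
  exists s : seq (tensor2 F m n),
    [/\ (size s <= r)%N, (forall U, U \in s -> rank_one_tensor U) &
        T = foldr (@tadd F m n) (@tzero F m n) s].

(* Diagonalizability over F: nonsingular P, Q with P A Q = (D_A, O) (resp. its
   transpose-shaped analogue when m > n) and P B Q = (D_B, O), D_A, D_B diagonal.
   Both shapes say exactly: every entry (i, j) with i <> j of P A Q and P B Q
   is zero. *)
Definition diagonalizable_tensor (F : fieldType) (m n : nat) (T : tensor2 F m n)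
  : Prop :=
  exists (P : 'M[F]_m) (Q : 'M[F]_n),
    [/\ P \in unitmx, Q \in unitmx,
        (forall (i : 'I_m) (j : 'I_n), nat_of_ord i != nat_of_ord j ->
            (P *m T.1 *m Q) i j = 0) &
        (forall (i : 'I_m) (j : 'I_n), nat_of_ord i != nat_of_ord j ->
            (P *m T.2 *m Q) i j = 0)].

Definition theorem3_claim (F : fieldType) : Prop :=
  forall (k : nat) (A : 'M[F]_k.+1),
    mxminpoly A = char_poly A ->
    (exists T : tensor2 F k.+1 k.+1,
        tensor_rank_le T 1 /\
        diagonalizable_tensor (tsub ((1%:M : 'M[F]_k.+1), A) T))
    /\ tensor_rank_le ((1%:M : 'M[F]_k.+1), A) k.+2.

(* Main.v *)
Require Import Defs.
From HB Require Import structures.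
From mathcomp Require Import all_boot all_order all_algebra.
Set Implicit Arguments. Unset Strict Implicit. Unset Printing Implicit Defensive.
Import Order.TTheory GRing.Theory Num.Theory.
Local Open Scope ring_scope.
From Stdlib Require Import ClassicalEpsilon.
Definition asb (P : Prop) : bool := if excluded_middle_informative P then true else false.
Lemma asbP (P : Prop) : reflect P (asb P).
Proof. by rewrite /asb; case: excluded_middle_informative => H; constructor. Qed.

Lemma ltn_predadd (a b c : nat) : (0 < c)%N -> ((a + c).-1 < (b + c).-1)%N = (a < b)%N.
Proof. by case: c => // c _; rewrite !addnS /= ltn_add2r. Qed.

Lemma divisor_cover (F : fieldType) (p : {poly F}) : p != 0 ->
  exists L : seq {poly F},
    (forall f, f \in L -> f %| p /\ (size f < size p)%N) /\
    (forall d, d %| p -> (size d < size p)%N -> exists2 f, f \in L & d %| f).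
Proof.
move: {2}(size p) (leqnn (size p)) => N; elim: N p => [|N IH] p.
  by rewrite leqn0 size_poly_eq0 => /eqP-> ; rewrite eqxx.
move=> szp p0.
case: (leqP (size p) 1) => [sp1|sp1].
  exists [::]; split=> // d dp sd.
  have: d == 0 by rewrite -size_poly_eq0 -leqn0 -ltnS (leq_trans sd).
  by move/eqP=> d0; move: dp; rewrite d0 dvd0p (negPf p0).
pose P m := asb (exists q : {poly F}, [/\ size q = m, (1 < m)%N & q %| p]).
have exq : exists m, P m by exists (size p); apply/asbP; exists p.
case: (ex_minnP exq) => m /asbP [q [sq m1 qp]] qmin.
have q0 : q != 0 by rewrite -size_poly_eq0 sq -lt0n ltnW.
set r := p %/ q.
have pE : p = r * q by rewrite divpK.
have r0 : r != 0 by apply: contraNneq p0 => r0; rewrite pE r0 mul0r.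
have szpE : size p = (size r + size q).-1 by rewrite pE size_mul.
have sr : (size r < size p)%N.
  rewrite szpE; rewrite -sq in m1; case: (size q) m1 => [|[|s]] //= _.
  by rewrite !addnS /= ltnS leq_addr.
have [Lr [HL1 HL2]] := IH r (leq_trans sr szp) r0.
have sq1 : (0 < size q)%N by rewrite sq ltnW.
exists (r :: [seq f * q | f <- Lr]); split.
  move=> f; rewrite inE => /orP[/eqP->|/mapP[g gL ->]].
    by rewrite {1}pE dvdp_mulIl.
  have [gr sg] := HL1 g gL.
  have g0 : g != 0 by apply: contraNneq r0 => g0; move: gr; rewrite g0 dvd0p.
  rewrite {1}pE dvdp_mul2r // gr; split=> //.
  by rewrite szpE size_mul // ltn_predadd.
move=> d dp sd.
have d0 : d != 0 by apply: contraNneq p0 => d0; move: dp; rewrite d0 dvd0p.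
set g := gcdp d q.
have g0 : g != 0 by rewrite gcdp_eq0 negb_and q0 orbT.
case: (leqP (size g) 1) => [g1|g1].
  exists r; first by rewrite inE eqxx.
  have cdq : coprimep d q.
    by rewrite coprimep_def eqn_leq g1 lt0n size_poly_eq0.
  by rewrite -(Gauss_dvdpl _ cdq) -pE.
have gq : g %| q by apply: dvdp_gcdr.
have sgq : size g = size q.
  apply/eqP; rewrite eqn_leq dvdp_leq // sq qmin //.
  by apply/asbP; exists g; split=> //; apply: dvdp_trans gq qp.
have qd : q %| d.
  rewrite -(eqp_dvdl _ (_ : g %= q)) ?dvdp_gcdl //.
  by rewrite -dvdp_size_eqp // sgq.
case/dvdpP: qd => d' dE.
have d'0 : d' != 0 by apply: contraNneq d0 => d'0; rewrite dE d'0 mul0r.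
have d'r : d' %| r by rewrite -(dvdp_mul2r _ _ q0) -dE -pE.
have sd' : (size d' < size r)%N.
  by move: sd; rewrite dE szpE size_mul // ltn_predadd.
have [f fL d'f] := HL2 d' d'r sd'.
exists (f * q); first by rewrite inE; apply/orP; right; apply/mapP; exists f.
by rewrite dE dvdp_mul2r.
Qed.
Lemma exists_nonroot (F : numDomainType) (P : {poly F}) : P != 0 -> exists t, P.[t] != 0.
Proof.
move=> P0; pose rs := [seq i%:R : F | i <- iota 0 (size P)].
case: (boolP (all (root P) rs)) => [H|/allPn[t _ nt]]; last by exists t.
have urs : uniq rs.
  by rewrite map_inj_uniq ?iota_uniq // => i j /eqP; rewrite eqr_nat => /eqP.
by have := max_poly_roots P0 H urs; rewrite size_map size_iota ltnn.
Qed.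

Lemma nz_entry (F : fieldType) n (u : 'rV[F]_n) : u != 0 -> exists j, u 0 j != 0.
Proof.
move=> u0; case: (boolP [forall j, u 0 j == 0]) => [/forallP H|/forallPn[j Hj]].
  by case/eqP: u0; apply/matrixP => i j; rewrite ord1 mxE; apply/eqP.
by exists j.
Qed.

Lemma line_poly (F : numFieldType) n (v w : 'rV[F]_n) (Ms : seq 'M[F]_n) :
  (forall M, M \in Ms -> v *m M != 0) ->
  exists2 P : {poly F}, P != 0 &
    forall t, P.[t] != 0 -> forall M, M \in Ms -> (v + t *: w) *m M != 0.
Proof.
elim: Ms => [|M Ms IH] H.
  by exists 1; rewrite ?oner_eq0.
have [P P0 HP] : exists2 P : {poly F}, P != 0 &
    forall t, P.[t] != 0 -> forall M, M \in Ms -> (v + t *: w) *m M != 0.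
  by apply: IH => M' M'in; apply: H; rewrite inE M'in orbT.
have [j Hj] := nz_entry (H M (mem_head _ _)).
pose f := ((v *m M) 0 j)%:P + ((w *m M) 0 j) *: 'X.
have fE t : f.[t] = ((v + t *: w) *m M) 0 j.
  by rewrite /f !hornerE mulmxDl -scalemxAl !mxE mulrC.
have f0 : f != 0 by apply: contraNneq Hj => f0; move: (fE 0); rewrite f0 horner0 scale0r addr0 => <-.
exists (f * P); first by rewrite mulf_neq0.
move=> t; rewrite hornerM mulf_eq0 negb_or => /andP[ft Pt] M'; rewrite inE => /orP[/eqP->|M'in].
  by apply: contraNneq ft => e; rewrite fE e mxE.
exact: HP.
Qed.

Lemma avoid_kernels (F : numFieldType) n (Ms : seq 'M[F]_n) :
  (forall M, M \in Ms -> M != 0) -> exists v : 'rV[F]_n, forall M, M \in Ms -> v *m M != 0.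
Proof.
elim: Ms => [|M Ms IH] H; first by exists 0.
have [v Hv] : exists v : 'rV[F]_n, forall M, M \in Ms -> v *m M != 0.
  by apply: IH => M' M'in; apply: H; rewrite inE M'in orbT.
case: (boolP (v *m M == 0)) => [/eqP vM|vM]; last first.
  by exists v => M'; rewrite inE => /orP[/eqP->|]; last exact: Hv.
have [w wM] : exists w : 'rV[F]_n, w *m M != 0.
  have M0 := H M (mem_head _ _).
  case: (boolP [forall i, row i M == 0]) => [/forallP Hr|/forallPn[i Hi]].
    by case/eqP: M0; apply/row_matrixP => i; rewrite row0; apply/eqP.
  by exists (delta_mx 0 i); rewrite -rowE.
have [P P0 HP] := line_poly w Hv.
have XP0 : 'X * P != 0 by rewrite mulf_neq0 ?polyX_eq0.
have [t Ht] := exists_nonroot XP0.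
move: Ht; rewrite hornerM hornerX mulf_eq0 negb_or => /andP[t0 Pt].
exists (v + t *: w) => M'; rewrite inE => /orP[/eqP->|M'in]; last exact: HP.
by rewrite mulmxDl vM add0r -scalemxAl scaler_eq0 negb_or t0.
Qed.
Definition kry (F : fieldType) n (v : 'rV[F]_n) (A : 'M[F]_n) : 'M[F]_n :=
  \matrix_(i < n) (v *m A ^+ i).

Lemma kry_mul (F : fieldType) k (v c : 'rV[F]_k.+1) (A : 'M[F]_k.+1) :
  c *m kry v A = v *m horner_mx A (\poly_(i < k.+1) c 0 (inord i)).
Proof.
rewrite mulmx_sum_row poly_def rmorph_sum mulmx_sumr; apply: eq_bigr => i _.
rewrite rowK inord_val -mul_polyC rmorphM /= horner_mx_C rmorphXn /= horner_mx_X.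
by rewrite -mulmxE mul_scalar_mx scalemxAr.
Qed.

Lemma cyclic_vec (F : numFieldType) k (A : 'M[F]_k.+1) :
  mxminpoly A = char_poly A -> exists v : 'rV[F]_k.+1, kry v A \in unitmx.
Proof.
move=> hp; set p := mxminpoly A.
have p0 : p != 0 by rewrite monic_neq0 // mxminpoly_monic.
have sp : size p = k.+2 by rewrite /p hp size_char_poly.
have [L [HL1 HL2]] := divisor_cover p0.
have hM : forall M, M \in map (horner_mx A) L -> M != 0.
  move=> M /mapP [f fL ->]; have [fp sf] := HL1 f fL.
  have f0 : f != 0 by apply: contraNneq p0 => f0; move: fp; rewrite f0 dvd0p.
  apply/eqP => hf; have := dvdp_leq f0 (mxminpoly_min hf).
  by rewrite leqNgt sf.
have [v Hv] := avoid_kernels hM.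
exists v; rewrite -row_free_unit -kermx_eq0; apply: contraT => nK.
have [i ci] : exists i, row i (kermx (kry v A)) != 0.
  case: (boolP [forall i, row i (kermx (kry v A)) == 0]) => [/forallP Hr|/forallPn[i Hi]].
    by case/eqP: nK; apply/row_matrixP => i; rewrite row0; apply/eqP.
  by exists i.
set c := row i _ in ci.
have cK : c *m kry v A = 0 by rewrite /c -row_mul mulmx_ker row0.
set g := \poly_(j < k.+1) c 0 (inord j).
have vg : v *m horner_mx A g = 0 by rewrite -kry_mul.
have g0 : g != 0.
  apply: contraNneq ci => e; apply/eqP/matrixP => a j; rewrite ord1.
  by have := congr1 (fun q : {poly F} => q`_j) e; rewrite coef_poly ltn_ord inord_val coef0 !mxE => ->.
have sg : (size g < size p)%N by rewrite sp ltnS size_poly.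
set d := gcdp g p.
have dp : d %| p by apply: dvdp_gcdr.
have sd : (size d < size p)%N by apply: leq_ltn_trans (leq_gcdpl _ g0) sg.
have vd : v *m horner_mx A d = 0.
  have [[u1 u2] /= hu] := Bezoutp g p.
  case/eqpP: hu => [[c1 c2] /= /andP[c10 c20] e].
  have : c2 *: (v *m horner_mx A d) = 0.
    rewrite scalemxAr -horner_mxZ -e horner_mxZ -scalemxAr.
    rewrite [u1 * g]mulrC !rmorphD !rmorphM /= mx_root_minpoly mulr0 addr0.
    by rewrite -mulmxE mulmxA vg mul0mx scaler0.
  by move/eqP; rewrite scaler_eq0 (negPf c20) => /eqP.
have [f fL df] := HL2 d dp sd.
case/dvdpP: df => q fE.
have := Hv _ (map_f (horner_mx A) fL).
by rewrite fE mulrC rmorphM /= -mulmxE mulmxA vd mul0mx eqxx.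
Qed.

Definition cmp (F : fieldType) k (q : {poly F}) : 'M[F]_k.+1 :=
  \matrix_(i < k.+1) (if (i.+1 < k.+1)%N then delta_mx 0 (inord i.+1) else - \row_(j < k.+1) q`_j).

Lemma key1 (F : fieldType) k (A : 'M[F]_k.+1) (v : 'rV_k.+1) (q : {poly F}) :
  kry v A \in unitmx ->
  kry v A *m A = cmp k q *m kry v A +
    delta_mx ord_max 0 *m ((v *m A ^+ k.+1 *m invmx (kry v A) + \row_j q`_j) *m kry v A).
Proof.
move=> Su; apply/row_matrixP => i.
rewrite [in RHS]rowE mulmxDr -!rowE !row_mul !rowK (mx11_scalar (row i (delta_mx _ _))) mul_scalar_mx !mxE /cmp.
have eP m : v *m A ^+ m *m A = v *m A ^+ m.+1 by rewrite -mulmxA mulmxE -exprSr.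
rewrite eP andbT; case: ifP => hi.
  rewrite -rowE rowK inordK //.
  have -> : (i == ord_max) = false.
    by apply/negbTE; apply: contraTneq hi => ->; rewrite ltnn.
  by rewrite scale0r addr0.
have -> : i = ord_max.
  by apply/val_inj => /=; move: (ltn_ord i) hi; rewrite ltnS leq_eqVlt ltnS => /orP[/eqP|->].
rewrite eqxx /= scale1r mulmxDl.
by rewrite (mulmxKV Su) mulNmx addrC addrK.
Qed.

Definition lam (F : numFieldType) n s : 'rV[F]_n := \row_(j < n) (j + 1 + s)%:R.
Definition qs (F : numFieldType) n s : {poly F} :=
  \prod_(a <- [seq (j + 1 + s)%:R | j <- iota 0 n]) ('X - a%:P).

Lemma qs_size (F : numFieldType) n s : size (qs F n s) = n.+1.
Proof. by rewrite /qs size_prod_XsubC size_map size_iota. Qed.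

Lemma qs_root (F : numFieldType) n s j : (j < n)%N -> (qs F n s).[(j + 1 + s)%:R] = 0.
Proof.
move=> jn; apply/eqP; rewrite -/(root _ _) root_prod_XsubC.
by apply: map_f; rewrite mem_iota.
Qed.

Lemma qs_lead (F : numFieldType) n s : (qs F n s)`_n = 1.
Proof.
have := monic_prod_XsubC [seq (j + 1 + s)%:R : F | j <- iota 0 n] xpredT id.
by rewrite monicE lead_coefE -/(qs F n s) qs_size => /eqP.
Qed.

Lemma key2 (F : numFieldType) k s :
  cmp k (qs F k.+1 s) *m Vandermonde k.+1 (lam F k.+1 s) =
  Vandermonde k.+1 (lam F k.+1 s) *m diag_mx (lam F k.+1 s).
Proof.
apply/row_matrixP => i; rewrite row_mul rowK mul_mx_diag; apply/matrixP => a j.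
rewrite ord1; case: ifP => hi.
  rewrite -rowE !mxE inordK // exprSr.
  done.
have -> : i = ord_max.
  by apply/val_inj => /=; move: (ltn_ord i) hi; rewrite ltnS leq_eqVlt ltnS => /orP[/eqP|->].
rewrite mulNmx !mxE.
have := qs_root F s (ltn_ord j).
rewrite (horner_coef_wide _ (_ : size _ <= k.+2)%N) ?qs_size // big_ord_recr /= qs_lead mul1r.
move/eqP; rewrite addrC addr_eq0 => /eqP e.
rewrite -exprSr e.
by congr (- _); apply: eq_bigr => m _; rewrite !mxE.
Qed.

Lemma vm_unit (F : numFieldType) k s : Vandermonde k.+1 (lam F k.+1 s) \in unitmx.
Proof.
rewrite unitmxE unitfE det_Vandermonde; apply/prodf_neq0 => i _.
apply/prodf_neq0 => j ij; rewrite !mxE subr_eq0 eqr_nat !eqn_add2r.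
by rewrite gtn_eqF.
Qed.

Lemma delta_choice (F : numFieldType) k (g : 'rV[F]_k.+1) :
  exists s, g + \row_j (qs F k.+1 s)`_j != 0.
Proof.
case: (boolP (g + \row_j (qs F k.+1 0)`_j == 0)) => [/eqP e0|]; last by exists 0%N.
case: (boolP (g + \row_j (qs F k.+1 1)`_j == 0)) => [/eqP e1|]; last by exists 1%N.
exfalso.
have er : \row_j (qs F k.+1 0)`_j = \row_j (qs F k.+1 1)`_j :> 'rV[F]_k.+1.
  by apply: (addrI g); rewrite e0 e1.
have eq : qs F k.+1 0 = qs F k.+1 1.
  apply/polyP => m; case: (ltnP m k.+1) => hm.
    by have := congr1 (fun r : 'rV[F]_k.+1 => r 0 (Ordinal hm)) er; rewrite !mxE.
  move: hm; rewrite leq_eqVlt => /orP[/eqP <-|hm]; first by rewrite !qs_lead.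
  by rewrite !nth_default ?qs_size.
have := qs_root F 0 (ltn0Sn k); rewrite eq /= => /eqP.
rewrite -/(root _ _) root_prod_XsubC => /mapP[j _] /eqP.
by rewrite -{1}(mulr1n (1:F)) eqr_nat !addn1.
Qed.

Lemma construct (F : numFieldType) k (A : 'M[F]_k.+1) :
  mxminpoly A = char_poly A ->
  exists T : tensor2 F k.+1 k.+1,
    tensor_rank_le T 1 /\ diagonalizable_tensor (tsub ((1%:M : 'M[F]_k.+1), A) T).
Proof.
move=> hp; have [v Su] := cyclic_vec hp.
set S := kry v A; set g := v *m A ^+ k.+1 *m invmx S.
have [s ds] := delta_choice g.
set q := qs F k.+1 s; set d := g + \row_j q`_j.
set el : 'cV[F]_k.+1 := delta_mx ord_max 0.
set Vm := Vandermonde k.+1 (lam F k.+1 s).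
have K1 : S *m A = cmp k q *m S + el *m (d *m S) := key1 q Su.
have K2 : cmp k q *m Vm = Vm *m diag_mx (lam F k.+1 s) := key2 F k s.
have Vu : Vm \in unitmx := vm_unit F k s.
set a := invmx S *m el; set b := (d *m S)^T.
have el0 : el != 0.
  by apply/eqP => /matrixP/(_ ord_max 0); rewrite !mxE !eqxx /= => /eqP; rewrite oner_eq0.
exists (0 *: (a *m b^T), 1 *: (a *m b^T)); split.
  exists [:: (0 *: (a *m b^T), 1 *: (a *m b^T))]; split => //; last first.
    by rewrite /= /tadd /tzero /= !addr0.
  move=> U; rewrite inE => /eqP ->; exists a, b, 0, 1; split => //.
  - by apply: contraNneq el0 => a0; rewrite -(mulKVmx Su el) -/a a0 mulmx0.
  - apply: contraNneq ds => b0.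
    have dS : d *m S = 0 by rewrite -[d *m S]trmxK -/b b0 trmx0.
    by rewrite -/d -(mulmxK Su d) dS mul0mx.
  - by rewrite xpair_eqE oner_eq0 andbF.
exists (invmx Vm *m S), (invmx S *m Vm); split.
- by rewrite unitmx_mul unitmx_inv Vu Su.
- by rewrite unitmx_mul unitmx_inv Vu Su.
- move=> i j ij; rewrite /tsub /= scale0r subr0 mulmx1 mulmxA (mulmxK Su) (mulVmx Vu) mxE.
  have -> : (i == j) = false by apply/negbTE; apply: contra ij => e; rewrite (eqP e).
  by rewrite mulr0n.
move=> i j ij; rewrite /tsub /= scale1r trmxK.
have eA : A - a *m (d *m S) = invmx S *m cmp k q *m S.
  by rewrite -[A in LHS](mulKmx Su) K1 mulmxDr !mulmxA addrK.
rewrite eA !mulmxA !(mulmxK Su) -mulmxA K2 mulKmx // mxE.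
have -> : (i == j) = false by apply/negbTE; apply: contra ij => e; rewrite (eqP e).
  by rewrite mulr0n.
Qed.

Lemma fold_sum (F : fieldType) m n (s : seq (tensor2 F m n)) :
  foldr (@tadd F m n) (@tzero F m n) s = (\sum_(U <- s) U.1, \sum_(U <- s) U.2).
Proof.
elim: s => [|U s IH] /=; first by rewrite !big_nil.
by rewrite IH !big_cons.
Qed.

Lemma rank_add (F : fieldType) m n (S T : tensor2 F m n) r1 r2 :
  tensor_rank_le S r1 -> tensor_rank_le T r2 -> tensor_rank_le (tadd S T) (r1 + r2).
Proof.
move=> [s1 [h1 h1' e1]] [s2 [h2 h2' e2]]; exists (s1 ++ s2); split.
- by rewrite size_cat leq_add.
- by move=> U; rewrite mem_cat => /orP[]; [apply: h1' | apply: h2'].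
- by rewrite e1 e2 !fold_sum /tadd /= !big_cat.
Qed.

Lemma size_index_enum_ord n : size (index_enum 'I_n) = n.
Proof. by rewrite [index_enum _]unlock -enumT size_enum_ord. Qed.

Lemma diag_decomp (F : fieldType) n (N : 'M[F]_n) :
  (forall i j : 'I_n, nat_of_ord i != nat_of_ord j -> N i j = 0) ->
  N = \sum_i N i i *: delta_mx i i.
Proof.
move=> HN; apply/matrixP => a b; rewrite summxE (bigD1 a) //= big1 => [|i ia]; last first.
  by rewrite !mxE eq_sym (negbTE ia) mulr0.
rewrite !mxE eqxx /= addr0.
case: (eqVneq b a) => [->|ba]; first by rewrite mulr1.
rewrite mulr0 HN //; apply: contra ba => e; apply/eqP/val_inj; rewrite /= (eqP e).
done.
Qed.

Lemma diag_rank (F : fieldType) n (D : tensor2 F n n) :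
  diagonalizable_tensor D -> tensor_rank_le D n.
Proof.
case: D => D1 D2 [P [Q [Pu Qu /= H1 H2]]].
set N1 := P *m D1 *m Q; set N2 := P *m D2 *m Q.
have dN1 : N1 = \sum_i N1 i i *: delta_mx i i := diag_decomp H1.
have dN2 : N2 = \sum_i N2 i i *: delta_mx i i := diag_decomp H2.
pose a (i : 'I_n) : 'cV[F]_n := invmx P *m delta_mx i 0.
pose b (i : 'I_n) : 'cV[F]_n := (delta_mx 0 i *m invmx Q)^T.
pose X i := a i *m (b i)^T.
have XE i : X i = invmx P *m delta_mx i i *m invmx Q.
  by rewrite /X /a /b trmxK !mulmxA -(mulmxA _ (delta_mx i 0)) mul_delta_mx.
have DE (M : 'M[F]_n) : M = invmx P *m (P *m M *m Q) *m invmx Q.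
  by rewrite -[RHS]mulmxA (mulmxK Qu) (mulKmx Pu).
exists [seq (N1 i i *: X i, N2 i i *: X i) | i <- index_enum 'I_n & (N1 i i, N2 i i) != (0, 0)].
split.
- by rewrite size_map size_filter (leq_trans (count_size _ _)) // size_index_enum_ord.
- move=> U /mapP[i]; rewrite mem_filter => /andP[nz _] ->.
  exists (a i), (b i), (N1 i i), (N2 i i); split => //.
  + apply/eqP => /(congr1 (mulmx P)); rewrite (mulKVmx Pu) mulmx0 => /matrixP/(_ i 0).
    by rewrite !mxE !eqxx /= => /eqP; rewrite oner_eq0.
  + apply/eqP => /(congr1 trmx); rewrite trmxK trmx0 => /(congr1 (mulmx^~ Q)).
    rewrite (mulmxKV Qu) mul0mx => /matrixP/(_ 0 i).
    by rewrite !mxE !eqxx /= => /eqP; rewrite oner_eq0.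
rewrite fold_sum !big_map !big_filter; congr (_, _).
  rewrite {1}(DE D1) -/N1 {1}dN1 mulmx_sumr mulmx_suml [RHS]big_mkcond /=.
  apply: eq_bigr => i _; rewrite XE -scalemxAr -scalemxAl.
  case: ifP => // /negbFE; rewrite xpair_eqE => /andP[/eqP-> _].
  by rewrite !scale0r.
rewrite {1}(DE D2) -/N2 {1}dN2 mulmx_sumr mulmx_suml [RHS]big_mkcond /=.
apply: eq_bigr => i _; rewrite XE -scalemxAr -scalemxAl.
case: ifP => // /negbFE; rewrite xpair_eqE => /andP[_ /eqP->].
by rewrite !scale0r.
Qed.

Lemma claim_num (F : numFieldType) : theorem3_claim F.
Proof.
move=> k A hp; have [T [T1 T2]] := construct hp; split; first by exists T.
have := rank_add T1 (diag_rank T2); rewrite add1n.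
have -> // : tadd T (tsub ((1%:M : 'M[F]_k.+1), A) T) = ((1%:M : 'M[F]_k.+1), A).
by rewrite /tadd /tsub /= !subrKC.
Qed.

Theorem mainTheorem3 :
  (forall R : rcfType, theorem3_claim R) /\
  (forall C : numClosedFieldType, theorem3_claim C).
Proof.
by split => F; apply: claim_num.
Qed.
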